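(* There exist a map $v:\mathbb Z^2\to\mathbb R^2$, constants $0<m\le M<\infty$, and a constant $r>0$ such that: $v(x)\ne v(y)$ for all distinct $x,y\in\mathbb Z^2$; $m\le\|v(x)\|\le M$ for all $x\in\mathbb Z^2$; and for all distinct $x,y\in\mathbb Z^2$, \[\inf_{t\in\mathbb R}\|(x+t v(x))-(y+t v(y))\|\ge r .\] Consequently, closed disks of any radius $\rho<r/2$ centered at the moving points $x+tv(x)$, $x\in\mathbb Z^2$, are pairwise disjoint for every $t\in\mathbb R$.
   Context: $\|\cdot\|$ is the Euclidean norm on $\mathbb R^2$. Each point $x\in\mathbb Z^2$ moves as $x(t)=x+tv(x)$, $t\in\mathbb R$. *)

(* Defs.v *)
From Stdlib Require Import Reals ZArith.
Open Scope R_scope.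

Definition R2 : Type := (R * R)%type.
Definition Z2 : Type := (Z * Z)%type.

Definition enorm (p : R2) : R := sqrt (fst p ^ 2 + snd p ^ 2).

Definition embZ2 (x : Z2) : R2 := (IZR (fst x), IZR (snd x)).

Definition mpos (v : Z2 -> R2) (x : Z2) (t : R) : R2 :=
  (IZR (fst x) + t * fst (v x), IZR (snd x) + t * snd (v x)).

Definition sub2 (p q : R2) : R2 := (fst p - fst q, snd p - snd q).

Definition closed_disk (c : R2) (rho : R) (z : R2) : Prop :=
  enorm (sub2 z c) <= rho.

(* Main.v *)
Require Import Defs.
From Stdlib Require Import Reals ZArith Lra Lia Psatz.
Open Scope R_scope.

Definition f (n : Z) : R := 3 + atan (IZR n).
Definition vv (x : Z2) : R2 := (f (snd x), - f (fst x)).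

Lemma f_bounds n : 1 < f n < 5.
Proof. unfold f. pose proof (atan_bound (IZR n)). pose proof PI_4. pose proof PI_RGT_0. lra. Qed.

Lemma f_sign (a b : Z) : (IZR a - IZR b) * (f a - f b) >= Rabs (f a - f b).
Proof.
  unfold f.
  destruct (Z.lt_trichotomy a b) as [H|[H|H]].
  - assert (IZR a + 1 <= IZR b) by (rewrite <- plus_IZR; apply IZR_le; lia).
    assert (atan (IZR a) < atan (IZR b)) by (apply atan_increasing; lra).
    rewrite Rabs_left by lra. nra.
  - subst. replace (3 + atan (IZR b) - (3 + atan (IZR b))) with 0 by ring.
    rewrite Rabs_R0. lra.
  - assert (IZR b + 1 <= IZR a) by (rewrite <- plus_IZR; apply IZR_le; lia).
    assert (atan (IZR b) < atan (IZR a)) by (apply atan_increasing; lra).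
    rewrite Rabs_right by lra. nra.
Qed.

Lemma f_inj a b : f a = f b -> a = b.
Proof.
  unfold f; intro H.
  destruct (Z.lt_trichotomy a b) as [H1|[H1|H1]]; auto.
  - apply IZR_lt in H1. apply atan_increasing in H1. lra.
  - apply IZR_lt in H1. apply atan_increasing in H1. lra.
Qed.

Lemma key (x y : Z2) t : x <> y ->
  let c := sub2 (mpos vv x t) (mpos vv y t) in 1 <= Rabs (fst c) \/ 1 <= Rabs (snd c).
Proof.
  intros Hxy c. destruct x as [x1 x2], y as [y1 y2].
  unfold c, sub2, mpos, vv; simpl.
  set (p := IZR x1 - IZR y1). set (q := IZR x2 - IZR y2).
  set (d1 := f x1 - f y1). set (d2 := f x2 - f y2).
  pose proof (f_sign x1 y1) as S1. pose proof (f_sign x2 y2) as S2.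
  fold p d1 in S1. fold q d2 in S2.
  assert (Hnz : d1 <> 0 \/ d2 <> 0).
  { destruct (Req_dec d1 0) as [E1|E1]; [|now left].
    destruct (Req_dec d2 0) as [E2|E2]; [|now right].
    exfalso. apply Hxy. unfold d1, d2 in *.
    rewrite (f_inj x1 y1) by lra. rewrite (f_inj x2 y2) by lra. reflexivity. }
  replace (IZR x1 + t * f x2 - (IZR y1 + t * f y2)) with (p + t * d2) by (unfold p, d2; ring).
  replace (IZR x2 + t * - f x1 - (IZR y2 + t * - f y1)) with (q - t * d1) by (unfold q, d1; ring).
  assert (Id : (p + t * d2) * d1 + (q - t * d1) * d2 = p * d1 + q * d2) by ring.
  destruct (Rle_or_lt 1 (Rabs (p + t * d2))) as [A|A]; [now left|].
  destruct (Rle_or_lt 1 (Rabs (q - t * d1))) as [B|B]; [now right|].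
  exfalso.
  assert (T : Rabs ((p + t * d2) * d1 + (q - t * d1) * d2) <=
              Rabs (p + t * d2) * Rabs d1 + Rabs (q - t * d1) * Rabs d2).
  { rewrite <- !Rabs_mult. apply Rabs_triang. }
  rewrite Id in T.
  assert (Rabs (p * d1 + q * d2) >= Rabs d1 + Rabs d2).
  { pose proof (Rabs_pos d1). pose proof (Rabs_pos d2). rewrite Rabs_right; lra. }
  pose proof (Rabs_pos d1). pose proof (Rabs_pos d2).
  set (u := Rabs (p + t * d2)) in *. set (w := Rabs (q - t * d1)) in *.
  set (e1 := Rabs d1) in *. set (e2 := Rabs d2) in *.
  pose proof (Rabs_pos (p + t * d2)). pose proof (Rabs_pos (q - t * d1)).
  destruct Hnz as [Hn|Hn]; pose proof (Rabs_pos_lt _ Hn) as Hp; fold e1 e2 in Hp.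
  - assert (u * e1 < e1) by (pose proof (Rmult_lt_compat_r e1 u 1 Hp A); lra). assert (0 <= (1-w)*e2) by (apply Rmult_le_pos; lra).
    nra.
  - assert (w * e2 < e2) by (pose proof (Rmult_lt_compat_r e2 w 1 Hp B); lra). assert (0 <= (1-u)*e1) by (apply Rmult_le_pos; lra).
    nra.
Qed.

Lemma coord_le a b : Rabs a <= sqrt (a ^ 2 + b ^ 2).
Proof.
  rewrite <- sqrt_Rsqr_abs. apply sqrt_le_1_alt. unfold Rsqr. nra.
Qed.

Theorem corollary3 :
  exists (v : Z2 -> R2) (m M r : R),
    0 < m /\ m <= M /\ 0 < r /\
    (forall x y : Z2, x <> y -> v x <> v y) /\
    (forall x : Z2, m <= enorm (v x) <= M) /\
    (* inf_t ||x(t) - y(t)|| >= r, i.e. r is a lower bound of all these values *)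
    (forall x y : Z2, x <> y ->
       forall t : R, r <= enorm (sub2 (mpos v x t) (mpos v y t))) /\
    (* consequence: closed disks of radius rho < r/2 stay pairwise disjoint *)
    (forall rho : R, rho < r / 2 ->
       forall (t : R) (x y : Z2), x <> y ->
       forall z : R2, ~ (closed_disk (mpos v x t) rho z /\ closed_disk (mpos v y t) rho z)).
Proof.
  exists vv, 1, 8, 1.
  split; [lra|]. split; [lra|]. split; [lra|]. split.
  { intros [x1 x2] [y1 y2] H E. unfold vv in E; simpl in E. injection E as E1 E2.
    apply H. rewrite (f_inj x2 y2 E1). rewrite (f_inj x1 y1) by lra. reflexivity. }
  split.
  { intros [x1 x2]. unfold enorm, vv; simpl.
    destruct (f_bounds x1) as [a1 a2]. destruct (f_bounds x2) as [b1 b2].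
    idtac.
    split.
    all: match goal with |- context[sqrt ?e] => replace e with (f x2 * f x2 + f x1 * f x1) by (simpl; ring) end.
    - rewrite <- sqrt_1. apply sqrt_le_1_alt. nra.
    - replace 8 with (sqrt (8 * 8)) by (rewrite sqrt_square; lra).
      apply sqrt_le_1_alt. nra. }
  split.
  { intros x y H t. destruct (key x y t H) as [K|K]; cbv zeta in K; unfold enorm.
    - eapply Rle_trans; [exact K| apply coord_le].
    - eapply Rle_trans; [exact K|].
      set (c := sub2 (mpos vv x t) (mpos vv y t)).
      pose proof (coord_le (snd c) (fst c)) as C. rewrite Rplus_comm in C. exact C. }
  intros rho Hr t x y H z [D1 D2].
  unfold closed_disk, enorm in D1, D2.
  pose proof (key x y t H) as K. cbv zeta in K.
  revert D1 D2 K.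
  generalize (mpos vv x t) (mpos vv y t). intros [X1 X2] [Y1 Y2] D1 D2 K.
  destruct z as [z1 z2]. unfold sub2 in *; cbn [fst snd] in *.
  pose proof (coord_le (z1 - X1) (z2 - X2)) as a1.
  pose proof (coord_le (z2 - X2) (z1 - X1)) as a2.
  pose proof (coord_le (z1 - Y1) (z2 - Y2)) as b1.
  pose proof (coord_le (z2 - Y2) (z1 - Y1)) as b2.
  rewrite Rplus_comm in a2, b2.
  destruct K as [K|K].
  - pose proof (Rabs_triang (X1 - z1) (z1 - Y1)) as T.
    replace (X1 - z1 + (z1 - Y1)) with (X1 - Y1) in T by ring.
    rewrite (Rabs_minus_sym X1 z1) in T. lra.
  - pose proof (Rabs_triang (X2 - z2) (z2 - Y2)) as T.
    replace (X2 - z2 + (z2 - Y2)) with (X2 - Y2) in T by ring.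
    rewrite (Rabs_minus_sym X2 z2) in T. lra.
Qed.
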